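(* For $0\le r_1,r_2\le n$, $0\le s\le N(r_1,r_2)$ and $t\in\mathbb C$: $$\lambda_s^{r_1,r_2}(t,n)=\sum_{j=0}^s(-1)^j\binom{t}{j}\frac{[s]_j\,[n-s+1]_j}{[n-r_1]_j\,[r_2]_j};$$ if $s\ge1$, then $$\Delta\lambda_s^{r_1,r_2}(t,n)=-\frac{s(n-s+1)}{r_2(n-r_1)}\,\lambda_{s-1}^{r_1-1,r_2-1}(t,n-2);$$ and the leading coefficient (of $t^s$) of $\lambda_s^{r_1,r_2}(t,n)$ is $$a_s^{r_1,r_2}(n)=(-1)^s\frac{[n-s+1]_s}{[n-r_1]_s\,[r_2]_s}.$$
   Context: For a finite set $\Omega$ with $|\Omega|=n\ge1$, let $G=S(\Omega)$, $X=\mathcal P(\Omega)$, $X_r=\{x\in X:|x|=r\}$, with $G$ acting on $L^2(X)$ (complex functions on $X$; $L^2(X_r)$ = functions supported on $X_r$) by $(\rho(g)\psi)(x)=\psi(g^{-1}x)$. For $0\le s\le\min(r,n-r)$, $L^2(X_r)_s$ is the unique irreducible $G$-subspace of $L^2(X_r)$ isomorphic to the irreducible representation associated with the partition $(n-s,s)$. $N(r_1,r_2)=\min(r_1,n-r_1,r_2,n-r_2)$. For $0\le s\le N(r_1,r_2)$, $\Lambda_s^{r_1,r_2}$ is a $G$-equivariant map $L^2(X)\to L^2(X)$ sending $L^2(X_{r_1})_s$ into $L^2(X_{r_2})_s$ and vanishing on its orthogonal complement, with kernel $\lambda$ defined on integers $\max(0,r_2-r_1)\le k\le\min(n-r_1,r_2)$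 by $(\Lambda_s^{r_1,r_2}\psi)(x_2)=\sum_{x_1\in X_{r_1}}\lambda(|x_2\setminus x_1|)\psi(x_1)$. The kernel agrees on its domain with a unique polynomial of degree $s$ which is nonzero at $0$; $\Lambda_s^{r_1,r_2}$ is normalized so that this polynomial takes the value $1$ at $t=0$, and this polynomial is denoted $\lambda_s^{r_1,r_2}(t,n)$; the same construction with a set of $n-2$ elements gives $\lambda_{s'}^{r_1',r_2'}(t,n-2)$. $\Delta h(t)=h(t+1)-h(t)$; $\binom{t}{j}=[t]_j/j!$; $[\alpha]_k=\alpha(\alpha-1)\cdots(\alpha-k+1)$. *)

(* Defs.v *)
From HB Require Import structures.
From mathcomp Require Import all_boot all_order all_algebra all_fingroup.
From mathcomp Require Import reals.
From mathcomp Require Import complex.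
Set Implicit Arguments. Unset Strict Implicit. Unset Printing Implicit Defensive.
Import Order.TTheory GRing.Theory Num.Theory.
Local Open Scope ring_scope.

(* Throughout, R : realType (a model of the real numbers) and R[i] is the field
   of complex numbers.  Omega = 'I_n, X = P(Omega) = {set 'I_n}. *)

Definition L2 (R : realType) (n : nat) : vectType R[i] := {ffun {set 'I_n} -> R[i]^o}.

Definition rho (R : realType) (n : nat) (g : {perm 'I_n}) (psi : L2 R n) : L2 R n :=
  [ffun x : {set 'I_n} => psi ((g^-1)%g @: x)].

Definition dotL2 (R : realType) (n : nat) (f h : L2 R n) : R[i] :=
  \sum_(x : {set 'I_n}) (f x : R[i]) * (h x : R[i])^*.

(* f lies in L^2(X_r): f is supported on X_r = {x : |x| = r} *)
Definition supported_on (R : realType) (n r : nat) (f : L2 R n) : Prop :=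
  forall x : {set 'I_n}, #|x| != r -> f x = 0.

Definition Ginvariant (R : realType) (n : nat) (V : {vspace L2 R n}) : Prop :=
  forall (g : {perm 'I_n}) (v : L2 R n), v \in V -> rho g v \in V.

Definition Girreducible (R : realType) (n : nat) (V : {vspace L2 R n}) : Prop :=
  [/\ Ginvariant V, V != 0%VS &
      forall W : {vspace L2 R n}, (W <= V)%VS -> Ginvariant W -> W = 0%VS \/ W = V].

Definition Giso (R : realType) (n : nat) (V W : {vspace L2 R n}) : Prop :=
  exists f : 'Hom(L2 R n, L2 R n),
    [/\ (f @: V)%VS = W, \dim W = \dim V &
        forall (g : {perm 'I_n}) (v : L2 R n), v \in V -> f (rho g v) = rho g (f v)].

Definition delta (R : realType) (n : nat) (x : {set 'I_n}) : L2 R n :=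
  [ffun y : {set 'I_n} => ((y == x)%:R : R[i])].

(* Specht module S^(n-s,s), realised inside the permutation module
   M^(n-s,s) = L^2(X_s) by identifying a tabloid with the set of entries of its
   second row.  A tableau of shape (n-s,s) is determined (up to the order of the
   remaining entries of the first row, which does not affect the polytabloid)
   by its first s columns (a j, b j), j < s, with a j in row 1 and b j in row 2;
   all 2s entries are distinct. The column group is generated by the
   transpositions (a j b j); the polytabloid is
      e_T = sum_{sigma in C_T} sgn(sigma) {sigma T}. *)
Definition tableau_ok (n s : nat) (a b : {ffun 'I_s -> 'I_n}) : bool :=
  [&& injectiveb a, injectiveb b & [forall i, forall j, a i != b j]].

Definition polytabloid (R : realType) (n s : nat) (a b : {ffun 'I_s -> 'I_n}) : L2 R n :=
  \sum_(e : {ffun 'I_s -> bool})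
     ((-1) ^+ #|[set i | e i]| : R[i]) *:
       delta R [set (if e i then a i else b i) | i in 'I_s].

Definition Specht (R : realType) (n s : nat) : {vspace L2 R n} :=
  <<[seq polytabloid R ab.1 ab.2 |
      ab <- enum [pred ab : {ffun 'I_s -> 'I_n} * {ffun 'I_s -> 'I_n} |
                   tableau_ok ab.1 ab.2]]>>%VS.

Definition is_L2rs (R : realType) (n r s : nat) (V : {vspace L2 R n}) : Prop :=
  [/\ forall v, v \in V -> supported_on r v,
      Girreducible V & Giso V (Specht R n s)].

(* p is the polynomial lambda_s^{r1,r2}(t,n): there is a G-equivariant map
   Lambda_s^{r1,r2} sending L^2(X_r1)_s into L^2(X_r2)_s, vanishing on the
   orthogonal complement of L^2(X_r1)_s, with kernel lam on the integers
   max(0,r2-r1) <= k <= min(n-r1,r2); p has degree s, agrees with lam on that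
   domain, and p(0) = 1 (normalisation). *)
Definition is_lambda_poly (R : realType) (n r1 r2 s : nat) (p : {poly R[i]}) : Prop :=
  exists (V1 V2 : {vspace L2 R n}) (Lam : 'Hom(L2 R n, L2 R n)) (lam : nat -> R[i]),
  [/\ is_L2rs r1 s V1, is_L2rs r2 s V2 &
      [/\ forall (g : {perm 'I_n}) (psi : L2 R n), Lam (rho g psi) = rho g (Lam psi),
      forall psi : L2 R n, psi \in V1 -> Lam psi \in V2,
      forall psi : L2 R n, (forall v, v \in V1 -> dotL2 psi v = 0) -> Lam psi = 0 &
      forall (psi : L2 R n) (x2 : {set 'I_n}), #|x2| = r2 ->
        Lam psi x2 = \sum_(x1 : {set 'I_n} | #|x1| == r1) lam #|x2 :\: x1| * psi x1]] /\
  [/\ size p = s.+1,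
      p.[0] = 1 &
      forall k : nat, (r2 - r1 <= k <= minn (n - r1) r2)%N -> p.[k%:R] = lam k].

Definition ffact (K : pzRingType) (alpha : K) (k : nat) : K :=
  \prod_(i < k) (alpha - i%:R).

Definition binomC (K : fieldType) (t : K) (j : nat) : K := ffact t j / (j`!)%:R.

Definition Nmin (n r1 r2 : nat) : nat := minn (minn r1 (n - r1)) (minn r2 (n - r2)).

(* Main.v *)
Require Import Defs.
From HB Require Import structures.
From mathcomp Require Import all_boot all_order all_algebra all_fingroup.
From mathcomp Require Import reals.
From mathcomp Require Import complex.
From mathcomp Require Import zify ring lra.
Set Implicit Arguments. Unset Strict Implicit. Unset Printing Implicit Defensive.
Import Order.TTheory GRing.Theory Num.Theory.
Local Open Scope ring_scope.


Section Alg.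
Variable K : numFieldType.

Definition bpoly (j : nat) : {poly K} :=
  (j`!%:R)^-1 *: \prod_(i < j) ('X - (i%:R)%:P).

Lemma ffact_recl (x : K) j : ffact x j.+1 = x * ffact (x - 1) j.
Proof.
rewrite /ffact big_ord_recl subr0; congr (_ * _); apply: eq_bigr => i _.
by rewrite lift0 -natr1 opprD addrA addrAC. Qed.

Lemma ffact_recr (x : K) j : ffact x j.+1 = ffact x j * (x - j%:R).
Proof. by rewrite /ffact big_ord_recr. Qed.

Lemma ffact_nat (k j : nat) : ffact (k%:R : K) j = (k ^_ j)%:R.
Proof.
elim: j => [|j IH]; first by rewrite /ffact big_ord0 ffactn0.
rewrite ffact_recr IH ffactnSr natrM.
case: (leqP j k) => hjk; first by rewrite natrB.
by rewrite ffact_small // !mul0r.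
Qed.

Lemma fact_neq0 m : (m`!%:R : K) != 0.
Proof. by rewrite pnatr_eq0 -lt0n fact_gt0. Qed.

Lemma binomC_nat (k j : nat) : binomC (k%:R : K) j = 'C(k, j)%:R.
Proof.
rewrite /binomC ffact_nat -bin_ffact natrM mulfK //; exact: fact_neq0.
Qed.

Lemma horner_bpoly j (t : K) : (bpoly j).[t] = binomC t j.
Proof.
rewrite /bpoly hornerZ horner_prod /binomC /ffact mulrC; congr (_ * _).
by apply: eq_bigr => i _; rewrite hornerXsubC.
Qed.

Lemma size_bpoly j : size (bpoly j) = j.+1.
Proof.
rewrite /bpoly size_scale ?invr_eq0 ?fact_neq0 //.
by rewrite size_prod_XsubC -[index_enum _]filter_predT deprecated_filter_index_enum -cardE card_ord.
Qed.

Lemma lead_bpoly j : lead_coef (bpoly j) = (j`!%:R)^-1.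
Proof.
rewrite /bpoly lead_coefZ (monicP (monic_prod_XsubC _ _ _)) mulr1 //.
Qed.

Lemma size_bsum k (d : nat -> K) : (size (\sum_(j < k) d j *: bpoly j)%R <= k)%N.
Proof.
elim: k => [|k IH]; first by rewrite big_ord0 size_poly0.
rewrite big_ord_recr /=; apply: leq_trans (size_polyD _ _) _.
rewrite geq_max (leq_trans IH) //=.
by apply: leq_trans (size_scale_leq _ _) _; rewrite size_bpoly.
Qed.

Lemma newton_exists k (p : {poly K}) : (size p <= k)%N ->
  exists d : nat -> K, p = \sum_(j < k) d j *: bpoly j.
Proof.
elim: k p => [|k IH] p hp.
  by exists (fun _ => 0); rewrite big_ord0; apply/eqP; rewrite -size_poly_eq0 -leqn0.
set c := p`_k * k`!%:R.
have hq : (size (p - c *: bpoly k)%R <= k)%N.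
  apply/leq_sizeP => j hj; rewrite coefB coefZ.
  case: (ltngtP j k) => hjk; first by rewrite ltnNge hj in hjk.
  - have /leq_sizeP H1 := hp; rewrite H1 //.
    have /leq_sizeP H2 : (size (bpoly k) <= k.+1)%N by rewrite size_bpoly.
    by rewrite H2 // mulr0 subr0.
  - rewrite hjk; have := lead_bpoly k; rewrite /lead_coef size_bpoly /= => ->.
    by rewrite /c mulfK ?fact_neq0 // subrr.
have [d Hd] := IH _ hq.
exists (fun j => if j == k then c else d j).
rewrite big_ord_recr /= eqxx -[p](subrK (c *: bpoly k)) Hd; congr (_ + _).
apply: eq_bigr => i _; by rewrite ltn_eqF.
Qed.

Lemma horner_bsum k (d : nat -> K) t :
  (\sum_(j < k) d j *: bpoly j).[t] = \sum_(j < k) d j * binomC t j.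
Proof.
rewrite horner_sum; apply: eq_bigr => i _; by rewrite hornerZ horner_bpoly.
Qed.


Lemma uniq_gamma (s' r2 : nat) (g : nat -> K) : (s'.+1 <= r2)%N -> g 0%N = 0 ->
  (forall m, (r2 - s' <= m <= r2)%N -> \sum_(j < s'.+2) g j * 'C(m, j)%:R = 0) ->
  forall j, (j < s'.+2)%N -> g j = 0.
Proof.
move=> hsr g0 Hm.
set P := \sum_(j < s'.+2) g j *: bpoly j.
have HP m : P.[m%:R] = \sum_(j < s'.+2) g j * 'C(m, j)%:R.
  by rewrite horner_bsum; apply: eq_bigr => i _; rewrite binomC_nat.
have P0 : P = 0.
  apply/eqP; apply: contraT => nz.
  set rs := (0 : K) :: [seq ((r2 - s' + i)%N%:R : K) | i <- iota 0 s'.+1].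
  have Hsz : (size P <= s'.+2)%N by apply: size_bsum.
  have Hs2 : size rs = s'.+2 by rewrite /= size_map size_iota.
  suff [Hr Hu] : all (root P) rs /\ uniq rs.
    by have := max_poly_roots nz Hr Hu; rewrite Hs2 ltnNge Hsz.
  split.
  - apply/allP => x; rewrite inE => /orP [/eqP -> | /mapP [i hi ->]].
      rewrite /root -[0 : K](mulr0n 1) HP big_ord_recl /= g0 mul0r add0r big1 //.
      by move=> i _; rewrite bin0n /= mulr0.
    move: hi; rewrite mem_iota add0n => /andP [_ hi].
    rewrite /root HP Hm //; apply/andP; split; first by rewrite leq_addr.
    lia.
  - rewrite cons_uniq map_inj_uniq ?iota_uniq ?andbT.
      apply/mapP => -[i _] /eqP; rewrite eq_sym pnatr_eq0; lia.
    by move=> a b /eqP; rewrite eqr_nat eqn_add2l => /eqP.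
move=> j; elim/ltn_ind: j => j IH hj.
have := HP j; rewrite P0 horner0 (bigD1 (Ordinal hj)) //= big1.
  by rewrite binn mulr1 addr0 => ->.
move=> i /eqP hij; case: (ltngtP i j) => h.
- by rewrite IH // mul0r.
- by rewrite bin_small // mulr0.
- by exfalso; apply: hij; apply: val_inj.
Qed.

Lemma binT (m r2 s : nat) : (m <= r2)%N ->
  \sum_(j < s.+1) (-1)^+j * 'C(m, j)%:R * 'C(r2 - j, s - j)%:R = 'C(r2 - m, s)%:R :> K.
Proof.
elim: m r2 s => [|m IH] r2 s hm.
  rewrite big_ord_recl /= expr0 mul1r bin0 mul1r !subn0 big1 ?addr0 //.
  by move=> i _; rewrite bin0n /= mulr0 mul0r.
case: s => [|s1].
  by rewrite big_ord_recl big_ord0 /= !bin0 addr0 mulr1 expr0 mulr1.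
rewrite big_ord_recl /= expr0 mul1r bin0 mul1r subn0.
have IH1 := IH r2 s1.+1 (ltnW hm).
rewrite big_ord_recl /= expr0 mul1r bin0 mul1r subn0 in IH1.
have IH2 := IH r2.-1 s1 ltac:(lia).
have -> : \sum_(i < s1.+1) (-1) ^+ (lift ord0 i) * 'C(m.+1, lift ord0 i)%:R *
   'C(r2 - lift ord0 i, s1.+1 - lift ord0 i)%:R =
  \sum_(i < s1.+1) (-1) ^+ (lift ord0 i) * 'C(m, lift ord0 i)%:R *
   'C(r2 - lift ord0 i, s1.+1 - lift ord0 i)%:R
  - \sum_(i < s1.+1) (-1) ^+ i * 'C(m, i)%:R * 'C(r2.-1 - i, s1 - i)%:R :> K.
  rewrite -sumrB; apply: eq_bigr => i _; rewrite lift0 binS natrD.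
  have -> : (r2 - i.+1 = r2.-1 - i)%N by lia.
  by rewrite subSS exprS; ring.
rewrite addrA IH1 IH2.
have -> : (r2 - m = (r2 - m.+1).+1)%N by lia.
have -> : (r2.-1 - m = r2 - m.+1)%N by lia.
by rewrite binS natrD addrK.
Qed.


Definition ecoef (n r1 r2 s j : nat) : K :=
  (-1) ^+ j * (ffact (s%:R : K) j * ffact ((n - s + 1)%N%:R) j)
  / (ffact ((n - r1)%N%:R) j * ffact (r2%:R) j).

Lemma ffactR (k j : nat) : (j <= k)%N -> (k ^_ j)%:R = k`!%:R / (k - j)`!%:R :> K.
Proof. by move=> h; rewrite -(ffact_fact h) natrM mulfK ?fact_neq0. Qed.

Lemma binR (a b : nat) : (b <= a)%N ->
  'C(a, b)%:R = a`!%:R / (b`!%:R * (a - b)`!%:R) :> K.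
Proof.
by move=> h; rewrite -(bin_fact h) !natrM mulfK // mulf_neq0 ?fact_neq0.
Qed.

Lemma ecoef_c (n r1 r2 s' j : nat) :
  (s'.+1 <= r1)%N -> (s'.+1 <= n - r1)%N -> (s'.+1 <= r2)%N -> (j <= s'.+1)%N ->
  ecoef n r1 r2 s'.+1 j * 'C(n - s' - j, r1 - s')%:R =
  'C(n - s', r1 - s')%:R / 'C(r2, s'.+1)%:R * ((-1) ^+ j * 'C(r2 - j, s'.+1 - j)%:R).
Proof.
move=> h1 h2 h3 hj.
rewrite /ecoef !ffact_nat.
have -> : (n - s'.+1 + 1 = n - s')%N by lia.
rewrite !ffactR; try lia.
rewrite !binR; try lia.
have -> : (n - s' - j - (r1 - s') = n - r1 - j)%N by lia.
have -> : (r2 - j - (s'.+1 - j) = r2 - s'.+1)%N by lia.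
have -> : (n - s' - (r1 - s') = n - r1)%N by lia.
have := fact_neq0; set f := fun m => (m`!%:R : K) => hf.
rewrite -!/(f _).
field; rewrite ?hf //; repeat (apply/andP; split); rewrite ?mulf_neq0 ?hf //.
Qed.


Lemma ecoef0 n r1 r2 s : ecoef n r1 r2 s 0 = 1.
Proof. by rewrite /ecoef /ffact !big_ord0 expr0 !mul1r invr1. Qed.

Lemma alg_main (n r1 r2 s : nat) (d : nat -> K) :
  (s <= r1)%N -> (s <= n - r1)%N -> (s <= r2)%N ->
  (\sum_(j < s.+1) d j *: bpoly j).[0] = 1 ->
  (forall s', s = s'.+1 -> forall m, (r2 - s' <= m <= r2)%N ->
     \sum_(j < s.+1) d j * 'C(m, j)%:R * 'C(n - s' - j, r1 - s')%:R = 0) ->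
  forall j, (j < s.+1)%N -> d j = ecoef n r1 r2 s j.
Proof.
move=> h1 h2 h3 hp0 hE.
have d0 : d 0%N = 1.
  move: hp0; rewrite horner_bsum big_ord_recl /= big1 ?addr0.
    by rewrite /binomC /ffact big_ord0 fact0 divr1 mulr1.
  move=> i _; rewrite -[0 : K](mulr0n 1) binomC_nat bin0n /=; by rewrite mulr0.
clear hp0; case: s h1 h2 h3 hE => [|s'] h1 h2 h3 hE j hj.
  by move: hj; rewrite ltnS leqn0 => /eqP ->; rewrite d0 ecoef0.
set c := fun j => ('C(n - s' - j, r1 - s')%:R : K).
have cnz : forall j, (j <= s'.+1)%N -> c j != 0.
  move=> i hi; rewrite /c pnatr_eq0 -lt0n bin_gt0; lia.
suff : (d j - ecoef n r1 r2 s'.+1 j) * c j = 0.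
  by move/eqP; rewrite mulf_eq0 (negbTE (cnz _ hj)) orbF subr_eq0 => /eqP.
apply: (uniq_gamma (s' := s') (r2 := r2) (g := fun j => (d j - ecoef n r1 r2 s'.+1 j) * c j)) => //.
  by rewrite d0 ecoef0 subrr mul0r.
move=> m hm.
have HE := hE s' erefl m hm.
under eq_bigr => i _ do rewrite mulrBl mulrBl.
rewrite sumrB.
have -> : \sum_(i < s'.+2) d i * c i * 'C(m, i)%:R =
          \sum_(i < s'.+2) d i * 'C(m, i)%:R * 'C(n - s' - i, r1 - s')%:R.
  by apply: eq_bigr => i _; rewrite /c mulrAC.
rewrite HE sub0r; apply/eqP; rewrite oppr_eq0; apply/eqP.
have -> : \sum_(i < s'.+2) ecoef n r1 r2 s'.+1 i * c i * 'C(m, i)%:R =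
   'C(n - s', r1 - s')%:R / 'C(r2, s'.+1)%:R *
   \sum_(i < s'.+2) (-1) ^+ i * 'C(m, i)%:R * 'C(r2 - i, s'.+1 - i)%:R.
  rewrite mulr_sumr; apply: eq_bigr => i _.
  rewrite /c ecoef_c //; last by rewrite -ltnS.
  ring.
have hmr : (m <= r2)%N by case/andP: hm.
rewrite (binT s'.+1 hmr).
rewrite (@bin_small (r2 - m)) ?mulr0 //; lia.
Qed.
End Alg.


Local Open Scope nat_scope.

Lemma disjP (T : finType) (A B : {set T}) :
  reflect (forall x, x \in A -> x \notin B) [disjoint A & B].
Proof. rewrite disjoint_subset; apply: (iffP subsetP) => H x /H; by rewrite ?inE. Qed.

Lemma count_sup (T : finType) (z A : {set T}) r : [disjoint z & A] -> #|z| <= r ->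
  #|[set x : {set T} | [&& z \subset x, [disjoint x & A] & #|x| == r]]|
  = 'C(#|T| - #|z| - #|A|, r - #|z|).
Proof.
move=> dzA hr.
set Y := ~: (z :|: A).
have cY : #|Y| = #|T| - #|z| - #|A|.
  have := cardsC (z :|: A); rewrite -/Y.
  have /eqP -> : #|z :|: A| == #|z| + #|A| by rewrite (leq_card_setU z A).2.
  lia.
have -> : [set x : {set T} | [&& z \subset x, [disjoint x & A] & #|x| == r]] =
  [set y :|: z | y in [set y : {set T} | (y \subset Y) && (#|y| == r - #|z|)]].
  apply/setP => x; rewrite !inE; apply/idP/imsetP.
  - case/and3P=> zx dxA /eqP cx; exists (x :\: z).
      rewrite inE cardsDS // cx eqxx andbT; apply/subsetP => i; rewrite !inE.
      case/andP=> iz ix; rewrite negb_or iz /=; exact: (disjP _ _ dxA i ix).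
    apply/setP => i; rewrite !inE; case: (boolP (i \in z)) => iz; last by rewrite orbF.
    by rewrite orbT (subsetP zx).
  - case=> y; rewrite inE => /andP [yY /eqP cy] ->.
    have dyz : [disjoint y & z].
      apply/disjP => i /(subsetP yY); rewrite !inE; by case: (i \in z).
    apply/and3P; split; first exact: subsetUr.
      apply/disjP => i; rewrite inE => /orP [/(subsetP yY)|iz]; rewrite ?inE.
        by rewrite negb_or => /andP [].
      exact: (disjP _ _ dzA i iz).
    have /eqP -> : #|y :|: z| == #|y| + #|z| by rewrite (leq_card_setU y z).2.
    rewrite cy; apply/eqP; lia.
rewrite card_in_imset ?cards_draws ?cY //.
move=> y1 y2; rewrite !inE => /andP [h1 _] /andP [h2 _] e.
apply/setP => i; have := congr1 (fun S : {set T} => i \in S) e; rewrite /= !inE.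
case: (boolP (i \in z)) => iz; last by rewrite !orbF.
have := subsetP h1 i; have := subsetP h2 i; rewrite !inE iz /=.
case: (i \in y1); case: (i \in y2) => // H1 H2; first [by have := H2 erefl | by have := H1 erefl].
Qed.

Lemma sum_binom_sets (T : finType) (z x2 : {set T}) r j : #|z| <= r ->
  \sum_(x1 : {set T} | (z \subset x1) && (#|x1| == r)) 'C(#|x2 :\: x1|, j)
  = 'C(#|x2 :\: z|, j) * 'C(#|T| - #|z| - j, r - #|z|).
Proof.
move=> hr.
transitivity (\sum_(x1 : {set T} | (z \subset x1) && (#|x1| == r))
               \sum_(A : {set T}) ((A \subset x2 :\: x1) && (#|A| == j) : nat)).
  apply: eq_bigr => x1 _; rewrite -cards_draws -sum1_card big_mkcond /=.
  by apply: eq_bigr => A _; rewrite inE; case: (_ && _).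
rewrite (exchange_big_dep xpredT) //=.
rewrite (bigID (fun A : {set T} => (A \subset x2 :\: z) && (#|A| == j))) /=.
rewrite [X in _ + X]big1 ?addn0; last first.
  move=> A hA; apply: big1 => x1 /andP [/andP [zx1 _] _].
  apply/eqP; rewrite eqb0; apply: contra hA => /andP [hA ->]; rewrite andbT.
  exact: subset_trans hA (setDS _ zx1).
transitivity (\sum_(A : {set T} | (A \subset x2 :\: z) && (#|A| == j))
                'C(#|T| - #|z| - j, r - #|z|)).
  apply: eq_bigr => A /andP [hA /eqP cA].
  have dzA : [disjoint z & A].
    by rewrite disjoint_sym; move: hA; rewrite subsetD => /andP [].
  have hc := count_sup dzA hr; rewrite cA in hc.
  rewrite -hc -[#|[set x | _]|]sum1_card [RHS]big_mkcond [LHS]big_mkcond /=.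
  apply: eq_bigr => x1 _; rewrite !inE subsetD cA eqxx andbT.
  move: hA; rewrite subsetD => /andP [hA2 _]; rewrite hA2 /= (disjoint_sym A).
  by case: (z \subset x1); case: [disjoint x1 & A]; case: (#|x1| == r).
rewrite sum_nat_const; congr (_ * _).
by rewrite -cards_draws; apply: eq_card => A; rewrite inE.
Qed.


Local Open Scope ring_scope.

Lemma rhoE (R : realType) n g (psi : L2 R n) x : rho g psi x = psi ((g^-1)%g @: x).
Proof. by rewrite /rho ffunE. Qed.

Lemma deltaE (R : realType) n (y x : {set 'I_n}) : delta R y x = ((x == y)%:R : R[i]).
Proof. by rewrite /delta ffunE. Qed.

Lemma imsetK_perm n (g : {perm 'I_n}) (S : {set 'I_n}) : (g^-1)%g @: (g @: S) = S.
Proof.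
by rewrite -imset_comp (eq_imset _ (fun x => permK g x)) imset_id.
Qed.

Lemma imsetKV_perm n (g : {perm 'I_n}) (S : {set 'I_n}) : g @: ((g^-1)%g @: S) = S.
Proof.
by rewrite -imset_comp (eq_imset _ (fun x => permKV g x)) imset_id.
Qed.

Section Tab.
Variables (R : realType) (n s : nat).
Hypothesis hs : (s + s <= n.+1)%N.

Definition ta : {ffun 'I_s -> 'I_n.+1} := [ffun i : 'I_s => inord i].
Definition tb : {ffun 'I_s -> 'I_n.+1} := [ffun i : 'I_s => inord (s + i)].

Lemma taE i : (ta i : nat) = i.
Proof. rewrite ffunE inordK //; have := ltn_ord i; lia. Qed.
Lemma tbE i : (tb i : nat) = (s + i)%N.
Proof. rewrite ffunE inordK //; have := ltn_ord i; lia. Qed.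

Lemma ta_inj : injective ta.
Proof. by move=> i j /(congr1 val); rewrite /= !taE => /val_inj. Qed.
Lemma tb_inj : injective tb.
Proof. by move=> i j /(congr1 val); rewrite /= !tbE => /addnI /val_inj. Qed.
Lemma tab_neq i j : ta i != tb j.
Proof. apply/eqP => /(congr1 val); rewrite /= taE tbE; have := ltn_ord i; lia. Qed.

Lemma tab_ok : tableau_ok ta tb.
Proof.
apply/and3P; split; try (apply/injectiveP; by [apply: ta_inj | apply: tb_inj]).
by apply/forallP => i; apply/forallP => j; exact: tab_neq.
Qed.

Definition sgn (e : {ffun 'I_s -> bool}) : R[i] := (-1) ^+ #|[set i | e i]|.
Definition img (e : {ffun 'I_s -> bool}) : {set 'I_n.+1} :=
  [set (if e i then ta i else tb i) | i in 'I_s].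
Definition eT : L2 R n.+1 := polytabloid R ta tb.

Lemma eTE x : eT x = \sum_(e : {ffun 'I_s -> bool}) sgn e * ((x == img e)%:R).
Proof.
rewrite /eT /polytabloid sum_ffunE; apply: eq_bigr => e _.
by rewrite ffunE deltaE.
Qed.

Lemma eT_in_Specht : eT \in Specht R n.+1 s.
Proof.
apply: memv_span; apply/mapP; exists (ta, tb) => //.
by rewrite mem_enum inE /= tab_ok.
Qed.

Definition e0 : {ffun 'I_s -> bool} := [ffun => false].

Lemma eT_neq0 : eT != 0.
Proof.
apply/eqP => /ffunP /(_ (img e0)); rewrite eTE ffunE (bigD1 e0) //= eqxx.
rewrite big1 ?addr0.
  rewrite /sgn (_ : [set i | e0 i] = set0) ?cards0 ?expr0 ?mulr1.
    by move/eqP; rewrite oner_eq0.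
  by apply/setP => i; rewrite !inE ffunE.
move=> e ne; case: eqP; last by rewrite mulr0.
move=> he; exfalso; apply/negP: ne; apply/negPn/eqP/ffunP => i.
rewrite ffunE; case: (boolP (e i)) => // ei.
have : ta i \in img e by apply/imsetP; exists i => //; rewrite ei.
rewrite -he => /imsetP [k _]; rewrite [e0 k]ffunE => /eqP; by rewrite (negbTE (tab_neq _ _)).
Qed.

Definition flip (j : 'I_s) (e : {ffun 'I_s -> bool}) : {ffun 'I_s -> bool} :=
  [ffun i => if i == j then ~~ e i else e i].

Lemma flipK j : involutive (flip j).
Proof.
move=> e; apply/ffunP => i; rewrite !ffunE; case: (i == j) => //=.
by rewrite negbK.
Qed.

Definition tau (j : 'I_s) : {perm 'I_n.+1} := tperm (ta j) (tb j).

Lemma tau_img j e : tau j @: img e = img (flip j e).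
Proof.
rewrite /img -imset_comp; apply: eq_imset => i /=; rewrite [flip j e i]ffunE /tau.
case: (eqVneq i j) => [->|nij].
  by case: (e j); rewrite /= ?tpermL ?tpermR.
case: (e i); apply: tpermD.
- by apply/eqP => /ta_inj eij; rewrite eij eqxx in nij.
- by rewrite eq_sym tab_neq.
- by rewrite tab_neq.
- by apply/eqP => /tb_inj eij; rewrite eij eqxx in nij.
Qed.

Lemma sgn_flip j e : sgn (flip j e) = - sgn e.
Proof.
rewrite /sgn (cardsD1 j [set i | e i]) (cardsD1 j [set i | flip j e i]).
have -> : [set i | flip j e i] :\ j = [set i | e i] :\ j.
  by apply/setP => i; rewrite !inE ffunE; case: eqP.
rewrite !inE ffunE eqxx !exprD; case: (e j) => /=; rewrite ?expr1 ?expr0; ring.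
Qed.

Lemma tauK j (S : {set 'I_n.+1}) : tau j @: (tau j @: S) = S.
Proof. by rewrite -imset_comp (eq_imset _ (tpermK _ _)) imset_id. Qed.

Lemma eT_anti j : rho (tau j) eT = - eT.
Proof.
apply/ffunP => x; rewrite rhoE ffunE !eTE /tau tpermV -/(tau j) -sumrN.
have H e : ((tau j @: x == img e) = (x == img (flip j e))).
  rewrite -tau_img; apply/eqP/eqP => [<-|->]; by rewrite tauK.
under eq_bigr => e _ do rewrite H.
rewrite (reindex_inj (inv_inj (flipK j))) /=.
apply: eq_bigr => e _; by rewrite flipK sgn_flip mulNr.
Qed.

Lemma pigeon (z0 : {set 'I_n.+1}) : (#|z0| < s)%N ->
  exists j, (ta j \notin z0) && (tb j \notin z0).
Proof.
move=> hz; case: (boolP [exists j, (ta j \notin z0) && (tb j \notin z0)]) => [/existsP //|].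
rewrite negb_exists => /forallP H; exfalso.
pose c j := if ta j \in z0 then ta j else tb j.
have cz j : c j \in z0.
  move: (H j); rewrite /c; case: ifP => // hta; by rewrite /= negbK.
have cinj : injective c.
  move=> i j; rewrite /c; case: (ta i \in z0); case: (ta j \in z0).
  - exact: ta_inj.
  - by move=> e; have := tab_neq i j; rewrite e eqxx.
  - by move=> e; have := tab_neq j i; rewrite e eqxx.
  - exact: tb_inj.
have : (#|c @: 'I_s| <= #|z0|)%N.
  by apply: subset_leq_card; apply/subsetP => x /imsetP [j _ ->].
by rewrite card_imset // card_ord leqNgt hz.
Qed.

Lemma tau_fix j (z0 : {set 'I_n.+1}) : ta j \notin z0 -> tb j \notin z0 ->
  tau j @: z0 = z0.
Proof.
move=> ha hb; rewrite -[RHS]imset_id; apply: eq_in_imset => x xz.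
rewrite /tau tpermD //; apply/eqP => e; [move: ha | move: hb]; by rewrite e xz.
Qed.

End Tab.

Definition Dfun (R : realType) (n s' r1 : nat) (v : L2 R n) : L2 R n :=
  [ffun z : {set 'I_n} => if #|z| == s' then
     \sum_(x : {set 'I_n} | (z \subset x) && (#|x| == r1)) (v x : R[i]) else 0].
Arguments Dfun R n s' r1 v : clear implicits.

Fact Dfun_lin (R : realType) n s' r1 : linear (Dfun R n s' r1).
Proof.
move=> a u v; apply/ffunP => z; rewrite !ffunE; case: ifP => _.
  by rewrite ?mulr_sumr ?scaler_sumr -big_split; apply: eq_bigr => x _; rewrite !ffunE.
by rewrite ?mulr0 ?scaler0 addr0.
Qed.

HB.instance Definition _ (R : realType) n s' r1 :=
  GRing.isLinear.Build R[i] (L2 R n) (L2 R n) _ (Dfun R n s' r1) (@Dfun_lin R n s' r1).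

Lemma subset_imset_perm n (g : {perm 'I_n}) (A B : {set 'I_n}) :
  (g @: A \subset g @: B) = (A \subset B).
Proof.
apply/idP/idP => h; last exact: imsetS.
by rewrite -(imsetK_perm g A) -(imsetK_perm g B); apply: imsetS.
Qed.

Lemma Dfun_equiv (R : realType) n s' r1 g (w : L2 R n) :
  Dfun R n s' r1 (rho g w) = rho g (Dfun R n s' r1 w).
Proof.
apply/ffunP => z; rewrite rhoE !ffunE card_imset; last exact: perm_inj.
case: ifP => // _.
rewrite (reindex_inj (imset_inj (@perm_inj _ g))) /=.
apply: eq_big => x.
  rewrite -{1}(imsetKV_perm g z) subset_imset_perm card_imset //; exact: perm_inj.
by move=> _; rewrite rhoE imsetK_perm.
Qed.

Lemma dom_ok n (x1 x2 : {set 'I_n}) :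
  (#|x2| - #|x1| <= #|x2 :\: x1| <= minn (n - #|x1|) #|x2|)%N.
Proof.
have h1 := cardsD x2 x1.
have h2 : (#|x2 :&: x1| <= #|x1|)%N by apply: subset_leq_card; apply: subsetIr.
have h3 : (#|x2 :\: x1| <= #|~: x1|)%N.
  by apply: subset_leq_card; rewrite setDE; apply: subsetIr.
have h4 := cardsC x1; rewrite card_ord in h4.
have h5 : (#|x2 :\: x1| <= #|x2|)%N by apply: subset_leq_card; apply: subsetDl.
lia.
Qed.

Lemma rho0 (R : realType) n g : rho g (0 : L2 R n) = 0.
Proof. by apply/ffunP => x; rewrite /rho !ffunE. Qed.

Lemma rhoD (R : realType) n g (u v : L2 R n) : rho g (u + v) = rho g u + rho g v.
Proof. by apply/ffunP => x; rewrite /rho !ffunE. Qed.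

Lemma oppfE (R : realType) n (f : L2 R n) x : (- f) x = - f x.
Proof. by rewrite ffunE. Qed.

Lemma key (R : realType) (n r1 r2 s' : nat) (p : {poly R[i]}) :
  (s'.+1 <= r1)%N -> (s'.+1 <= n.+1 - r1)%N ->
  is_lambda_poly n.+1 r1 r2 s'.+1 p ->
  forall z x2 : {set 'I_n.+1}, #|z| = s' -> #|x2| = r2 ->
  \sum_(x1 : {set 'I_n.+1} | (z \subset x1) && (#|x1| == r1)) p.[(#|x2 :\: x1|)%:R] = 0.
Proof.
move=> h1 h2 [V1 [V2 [Lam [lam [[L1 L2h [Heq Hmap Hperp Hker]] [hsize hp0 hdom]]]]]].
move=> z x2 cz cx2.
case: L1 => _ [Ginv Vnz Hirr] [f [fV dimV feq]].
have hs : (s'.+1 + s'.+1 <= n.+1)%N by lia.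
have eS := eT_in_Specht R hs.
rewrite -fV in eS; case/memv_imgP: eS => v vV fv.
have vnz : v != 0.
  apply: contraNneq (eT_neq0 R hs) => v0; by rewrite fv v0 linear0.
have ker0 : (V1 :&: lker f)%VS = 0%VS.
  apply/eqP; rewrite -dimv_eq0; have := limg_ker_dim f V1.
  by rewrite fV dimV => /eqP; rewrite -{2}[\dim V1]add0n eqn_add2r => /eqP ->.
have anti (j : 'I_s'.+1) : rho (tau n j) v = - v.
  have wV : rho (tau n j) v + v \in V1 by rewrite memvD // Ginv.
  have wK : rho (tau n j) v + v \in lker f.
    by rewrite memv_ker linearD /= feq // -fv (eT_anti R hs) addNr.
  have : rho (tau n j) v + v \in (V1 :&: lker f)%VS by rewrite memv_cap wV wK.
  by rewrite ker0 memv0 addr_eq0 => /eqP.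
pose Dl := linfun (Dfun R n.+1 s' r1).
have Kinv : Ginvariant (V1 :&: lker Dl)%VS.
  move=> g w; rewrite !memv_cap !memv_ker !lfunE /= => /andP [wV /eqP wD].
  by rewrite Ginv //= Dfun_equiv wD rho0 eqxx.
have Dv : Dfun R n.+1 s' r1 v = 0.
  apply/ffunP => z0; rewrite [RHS]ffunE.
  case: (boolP (#|z0| == s')) => hz0; last by rewrite ffunE (negbTE hz0).
  have [j /andP [ha hb]] : exists j, (ta n s'.+1 j \notin z0) && (tb n s'.+1 j \notin z0).
    by apply: (pigeon hs); rewrite (eqP hz0).
  have e1 : Dfun R n.+1 s' r1 (rho (tau n j) v) z0 = Dfun R n.+1 s' r1 v z0.
    by rewrite Dfun_equiv rhoE /tau tpermV -/(tau n j) tau_fix.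
  have e3 : Dfun R n.+1 s' r1 (rho (tau n j) v) = - Dfun R n.+1 s' r1 v.
    by rewrite anti linearN.
  rewrite e3 oppfE in e1; move: e1; set X := Dfun R n.+1 s' r1 v z0 => e2.
  move/eqP: e2; rewrite eq_sym -addr_eq0 -mulr2n mulrn_eq0 /= => /eqP ->.
  by [].
have KV : (V1 :&: lker Dl)%VS = V1.
  case: (Hirr _ (capvSl _ _) Kinv) => // K0.
  have : v \in (V1 :&: lker Dl)%VS by rewrite memv_cap vV memv_ker lfunE /= Dv.
  by rewrite K0 memv0 (negbTE vnz).
have DV w : w \in V1 -> Dfun R n.+1 s' r1 w = 0.
  by rewrite -KV memv_cap memv_ker lfunE /= => /andP [_ /eqP].
pose psi : L2 R n.+1 := [ffun x : {set 'I_n.+1} => (((z \subset x) && (#|x| == r1))%:R : R[i])].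
have Lpsi : Lam psi = 0.
  apply: Hperp => w wV; rewrite /dotL2.
  have := DV w wV => /ffunP /(_ z); rewrite !ffunE cz eqxx => HD.
  transitivity ((\sum_(x : {set 'I_n.+1} | (z \subset x) && (#|x| == r1)) w x)^*).
    rewrite [RHS]rmorph_sum [RHS]big_mkcond /=; apply: eq_bigr => x _; rewrite ffunE.
    by case: (_ && _); rewrite ?mul1r ?mul0r.
  by rewrite HD conjC0.
have := Hker psi x2 cx2; rewrite Lpsi ffunE => /esym.
move=> HH; rewrite -[X in _ = X]HH big_mkcond [RHS]big_mkcond /=; apply: eq_bigr => x1 _; rewrite ffunE.
case: (boolP (#|x1| == r1)) => hx1; rewrite ?andbT ?andbF ?mulr0 //.
case: (z \subset x1); rewrite ?mulr0 ?mulr1 //.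
by rewrite hdom //; have := dom_ok x1 x2; rewrite (eqP hx1) cx2.
Qed.


Lemma card_lt_set n b : (b <= n)%N -> #|[set k : 'I_n | (k < b)%N]| = b.
Proof.
move=> hb.
have -> : [set k : 'I_n | (k < b)%N] = widen_ord hb @: [set: 'I_b].
  apply/setP => k; rewrite inE; apply/idP/imsetP => [kb|[j _ ->]]; last exact: (ltn_ord j).
  by exists (Ordinal kb) => //; apply: val_inj.
rewrite card_imset ?cardsT ?card_ord //; by move=> x y /(congr1 val) /= /val_inj.
Qed.

Lemma lt_set_sub n a b : (a <= b)%N ->
  [set k : 'I_n | (k < a)%N] \subset [set k : 'I_n | (k < b)%N].
Proof. by move=> hab; apply/subsetP => k; rewrite !inE => h; apply: leq_trans h hab. Qed.

Lemma sets_exist n s' r2 i : (i <= s')%N -> (i <= r2)%N -> (s' + r2 <= n)%N ->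
  exists z x2 : {set 'I_n}, [/\ #|z| = s', #|x2| = r2 & #|x2 :\: z| = (r2 - i)%N].
Proof.
move=> h1 h2 h3.
pose L b := [set k : 'I_n | (k < b)%N].
exists (L s'), (L (s' - i + r2)%N :\: L (s' - i)%N); split.
- by rewrite card_lt_set //; lia.
- rewrite cardsDS ?lt_set_sub ?card_lt_set; lia.
have -> : L (s' - i + r2)%N :\: L (s' - i)%N :\: L s' = L (s' - i + r2)%N :\: L s'.
  apply/setP => k; rewrite !inE.
  case: (ltnP k s') => hk /=//.
  by rewrite -leqNgt (leq_trans (leq_subr i s') hk).
rewrite cardsDS ?lt_set_sub ?card_lt_set; lia.
Qed.

Lemma part1 (R : realType) n r1 r2 s (p : {poly R[i]}) :
  (r1 <= n)%N -> (r2 <= n)%N -> (s <= Nmin n r1 r2)%N -> is_lambda_poly n r1 r2 s p ->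
  p = \sum_(j < s.+1) ecoef R[i] n r1 r2 s j *: bpoly R[i] j.
Proof.
move=> hr1 hr2 hN hl.
have hs1 : (s <= r1)%N by rewrite /Nmin in hN; lia.
have hs2 : (s <= n - r1)%N by rewrite /Nmin in hN; lia.
have hs3 : (s <= r2)%N by rewrite /Nmin in hN; lia.
have hs4 : (s <= n - r2)%N by rewrite /Nmin in hN; lia.
have [hsz hp0 _] : [/\ size p = s.+1, p.[0] = 1 & True].
  by case: hl => ? [? [? [? [_ [? ? _]]]]].
have [d Hd] := newton_exists (eq_leq hsz).
suff Hd' : forall j, (j < s.+1)%N -> d j = ecoef R[i] n r1 r2 s j.
  by rewrite {1}Hd; apply: eq_bigr => j _; rewrite Hd'.
apply: alg_main => //; first by rewrite -Hd.
move=> s' es m hm; subst s.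
case: n hr1 hr2 hN hl hs2 hs4 => [|n] hr1 hr2 hN hl hs2 hs4; first lia.
have [z [x2 [cz cx2 cm]]] := @sets_exist n.+1 s' r2 (r2 - m) ltac:(lia) ltac:(lia) ltac:(lia).
have := key hs1 hs2 hl cz cx2.
rewrite Hd.
under eq_bigr => x1 _ do rewrite horner_bsum.
rewrite exchange_big /= => HH; rewrite -[X in _ = X]HH; apply: eq_bigr => j _.
rewrite -mulr_sumr -mulrA; congr (_ * _).
under eq_bigr => x1 _ do rewrite binomC_nat.
rewrite -natr_sum sum_binom_sets ?cz ?card_ord ?cm; last lia.
by rewrite natrM; congr (_ * _); congr ('C(_, _)%:R); lia.
Qed.

Section Fin.
Variable K : numFieldType.

Lemma binomC0 (x : K) : binomC x 0 = 1.
Proof. by rewrite /binomC /ffact big_ord0 fact0 divr1. Qed.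

Lemma binomC_succ (t : K) j : binomC (t + 1) j.+1 - binomC t j.+1 = binomC t j.
Proof.
rewrite /binomC ffact_recl addrK ffact_recr factS natrM.
have h1 : (j.+1%:R : K) != 0 by rewrite pnatr_eq0.
have h2 := fact_neq0 K j.
rewrite -natr1; field; rewrite ?h2 ?andbT //; by rewrite natr1.
Qed.

Lemma natr_pred (a b : nat) : a = b.+1 -> (a%:R - 1 : K) = b%:R.
Proof. by move=> ->; rewrite -natr1 addrK. Qed.

Lemma delta_bsum s (e : nat -> K) t :
  (\sum_(j < s.+1) e j *: bpoly K j).[t + 1] - (\sum_(j < s.+1) e j *: bpoly K j).[t]
  = \sum_(j < s) e j.+1 * binomC t j.
Proof.
rewrite !horner_bsum -sumrB big_ord_recl /= !binomC0 subrr add0r.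
by apply: eq_bigr => i _; rewrite -mulrBr binomC_succ.
Qed.

End Fin.


Theorem theorem3 (R : realType) (n r1 r2 s : nat) (p : {poly R[i]}) :
  (r1 <= n)%N -> (r2 <= n)%N -> (s <= Nmin n r1 r2)%N ->
  is_lambda_poly n r1 r2 s p ->
  [/\ (forall t : R[i],
         p.[t] = \sum_(0 <= j < s.+1)
                   (-1) ^+ j * binomC t j
                   * (ffact (s%:R : R[i]) j * ffact ((n - s + 1)%N%:R) j)
                   / (ffact ((n - r1)%N%:R) j * ffact (r2%:R) j)),
      (1 <= s)%N ->
        forall q : {poly R[i]}, is_lambda_poly (n - 2) (r1 - 1) (r2 - 1) (s - 1) q ->
        forall t : R[i],
          p.[t + 1] - p.[t] =
            - ((s * (n - s + 1))%N%:R / (r2 * (n - r1))%N%:R) * q.[t] &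
      lead_coef p =
        (-1) ^+ s * ffact ((n - s + 1)%N%:R : R[i]) s
        / (ffact ((n - r1)%N%:R) s * ffact (r2%:R) s)].
Proof.
move=> hr1 hr2 hN hl.
have hs1 : (s <= r1)%N by rewrite /Nmin in hN; lia.
have hs2 : (s <= n - r1)%N by rewrite /Nmin in hN; lia.
have hs3 : (s <= r2)%N by rewrite /Nmin in hN; lia.
have hs4 : (s <= n - r2)%N by rewrite /Nmin in hN; lia.
have Hp := part1 hr1 hr2 hN hl.
split.
- move=> t; rewrite {1}Hp horner_bsum big_mkord; apply: eq_bigr => j _.
  rewrite /ecoef; ring.
- case: s hN hl Hp hs1 hs2 hs3 hs4 => [//|s'] hN hl Hp hs1 hs2 hs3 hs4 _ q hq t.
  have hN' : (s'.+1 - 1 <= Nmin (n - 2) (r1 - 1) (r2 - 1))%N by rewrite /Nmin; lia.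
  have Hq := part1 (ltac:(lia) : (r1 - 1 <= n - 2)%N) (ltac:(lia) : (r2 - 1 <= n - 2)%N) hN' hq.
  have es : (s'.+1 - 1 = s')%N by lia.
  rewrite es in Hq.
  rewrite Hp Hq delta_bsum horner_bsum mulr_sumr; apply: eq_bigr => j _.
  suff -> : ecoef R[i] n r1 r2 s'.+1 j.+1 =
     - ((s'.+1 * (n - s'.+1 + 1))%N%:R / (r2 * (n - r1))%N%:R) *
     ecoef R[i] (n - 2) (r1 - 1) (r2 - 1) s' j by rewrite [RHS]mulrA.
  rewrite /ecoef !ffact_recl.
  rewrite (@natr_pred _ s'.+1 s') // (@natr_pred _ (n - s'.+1 + 1) (n - 2 - s' + 1)); last lia.
  rewrite (@natr_pred _ (n - r1) (n - 2 - (r1 - 1))); last lia.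
  rewrite (@natr_pred _ r2 (r2 - 1)); last lia.
  rewrite !natrM !invfM exprS; ring.
- have hsz : size p = s.+1 by case: hl => ? [? [? [? [_ [? ? _]]]]].
  rewrite /lead_coef hsz /= Hp big_ord_recr /= coefD coefZ.
  have -> : (\sum_(j < s) ecoef R[i] n r1 r2 s j *: bpoly R[i] j)`_s = 0.
    by apply/leq_sizeP; [apply: size_bsum | apply: leqnn].
  have := lead_bpoly R[i] s; rewrite /lead_coef size_bpoly /= => ->.
  rewrite add0r /ecoef ffact_nat ffactnn.
  set B := ffact _ s; set C := ffact _ s; set D := ffact _ s.
  have hf := fact_neq0 R[i] s.
  rewrite (_ : (-1) ^+ s * (s`!%:R * B) / (C * D) = ((-1) ^+ s * B / (C * D)) * s`!%:R); last ring.
  by rewrite mulfK.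
Qed.
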